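(* Let $\mathcal T,\mathcal S$ be sets, $N\ge1$ an integer, $0<\delta<1\le M$, and $\tau:\mathcal T\to(0,M]$, $\sigma:\mathcal S\to(0,M]$ functions. (1) Suppose that for all integers $k\ge N$ and $\ell\ge1$, $$\#\tau^{-1}([\delta^{k+\ell},\delta^k))\le\#\sigma^{-1}([\delta^{k+\ell+1},\delta^{k-1}))\quad\text{and}\quad \#\sigma^{-1}([\delta^{k+\ell},\delta^k))\le\#\tau^{-1}([\delta^{k+\ell+1},\delta^{k-1})).$$ Then there is $\delta'>0$ such that one of the following holds: (i) there is a bijection $\eta:\mathcal T\to\mathcal S$ with $\delta'\le \tau(t)/\sigma(\eta(t))\le 1/\delta'$ for all $t\in\mathcal T$; (ii) for some set $\mathcal I$ (disjoint from $\mathcal T$), extending $\tau$ to $\mathcal T\cup\mathcal I$ by $\tau(t)=1$ for $t\in\mathcal I$, there is a bijection $\eta:\mathcal T\cup\mathcal I\to\mathcal S$ with $\delta'\le \tau(t)/\sigma(\eta(t))\le 1/\delta'$ for all $t\in\mathcal T\cup\mathcal I$; (iii) for some set $\mathcal I$ (disjoint from $\mathcal S$), extending $\sigma$ to $\mathcal S\cup\mathcal I$ by $\sigma(s)=1$ for $s\in\mathcal I$, there is a bijection $\eta:\mathcal T\to\mathcal S\cup\mathcal I$ with $\delta'\le \tau(t)/\sigma(\eta(t))\le 1/\delta'$ for all $t\in\mathcal T$. (2) If the two displayed inequalities hold for all integers $k\in\mathbb Z$ (and all $\ell\ge1$), then alternative (i) holds for some $\delta'>0$.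
   Context: $\#$ denotes cardinality (possibly infinite). *)

(* Defs.v *)
From HB Require Import structures.
From mathcomp Require Import all_boot all_order all_algebra.
From mathcomp Require Import all_classical all_reals.
Set Implicit Arguments. Unset Strict Implicit. Unset Printing Implicit Defensive.
Import Order.TTheory GRing.Theory Num.Theory.
Local Open Scope classical_set_scope.
Local Open Scope ring_scope.

Definition preIco (R : realType) (X : Type) (f : X -> R) (a b : R) : set X :=
  [set x | a <= f x < b].

Definition count_hyp (R : realType) (T S : Type) (delta : R)
    (tau : T -> R) (sigma : S -> R) (k : int) (l : nat) : Prop :=
  card_le (preIco tau (delta ^ (k + l%:Z)) (delta ^ k))
          (preIco sigma (delta ^ (k + l%:Z + 1)) (delta ^ (k - 1)))
  /\
  card_le (preIco sigma (delta ^ (k + l%:Z)) (delta ^ k))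
          (preIco tau (delta ^ (k + l%:Z + 1)) (delta ^ (k - 1))).

Definition comparable_by (R : realType) (d' a b : R) : Prop :=
  d' <= a / b <= d'^-1.

Definition ext1 (R : realType) (X I : Type) (f : X -> R) (x : X + I) : R :=
  match x with inl y => f y | inr _ => 1 end.

(* Main.v *)
Require Import Defs.
From HB Require Import structures.
From mathcomp Require Import all_boot all_order all_algebra finmap zify.
From mathcomp Require Import all_classical all_reals exp.
From Stdlib Require Import ClassicalEpsilon.
Import Order.TTheory GRing.Theory Num.Theory.
Set Implicit Arguments. Unset Strict Implicit. Unset Printing Implicit Defensive.
Local Open Scope classical_set_scope.

Definition injon {T S} (A : set T) (f : T -> S) :=
  forall x y, A x -> A y -> f x = f y -> x = y.
Definition mapsto {T S} (A : set T) (B : set S) (f : T -> S) :=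
  forall x, A x -> B (f x).

Section Compar.
Variables (T S : Type) (P : set T) (Q : set S).

Definition goodG (G : set (T * S)) :=
  [/\ forall a b, G (a, b) -> P a /\ Q b,
      forall a b b', G (a, b) -> G (a, b') -> b = b' &
      forall a a' b, G (a, b) -> G (a', b) -> a = a'].

Lemma comparability (t0 : T) (s0 : S) :
  (exists h : T -> S, injon P h /\ mapsto P Q h) \/
  (exists h : S -> T, injon Q h /\ mapsto Q P h).
Proof.
pose GT := {G : set (T * S) | goodG G}.
have g0 : goodG set0 by split.
pose R := fun x y : GT => `[< proj1_sig x `<=` proj1_sig y >].
have [[G gG] Gmax] : exists t : GT, premaximal R t.
  apply: (@ZL_preorder _ (exist _ set0 g0)).
  - by move=> t; apply/asboolP.
  - by move=> r s t /asboolP rs /asboolP st; apply/asboolP => x /rs /st.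
  move=> A Atot.
  pose U := fun p : T * S => exists x : GT, A x /\ proj1_sig x p.
  have gU : goodG U.
    split.
    - by move=> a b [[x [? ? ?]] /= [_ Hx]]; eauto.
    - move=> a b b' [x [Ax Hx]] [y [Ay Hy]].
      have [/asboolP xy|/asboolP yx] := Atot _ _ Ax Ay.
      + by case: y Ay Hy xy => y [? ? ?] /= _ Hy xy; eauto.
      + by case: x Ax Hx yx => x [? ? ?] /= _ Hx yx; eauto.
    - move=> a a' b [x [Ax Hx]] [y [Ay Hy]].
      have [/asboolP xy|/asboolP yx] := Atot _ _ Ax Ay.
      + by case: y Ay Hy xy => y [? ? ?] /= _ Hy xy; eauto.
      + by case: x Ax Hx yx => x [? ? ?] /= _ Hx yx; eauto.
  exists (exist _ U gU) => s As; apply/asboolP => p Hp /=; by exists s.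
case: gG => [GPQ Gf Gi] in Gmax *.
have [domP|] := pselect (forall a, P a -> exists b, G (a, b)).
  left; exists (fun a => epsilon (inhabits s0) (fun b => G (a, b))).
  have spec x : P x -> G (x, epsilon (inhabits s0) (fun y => G (x, y))).
    by move=> Pa; exact: (epsilon_spec (inhabits s0) (fun y => G (x, y)) (domP x Pa)).
  split.
  - move=> x y Px Py E; have := spec _ Py; have := spec _ Px; rewrite E.
    by move=> H1 H2; exact: Gi H1 H2.
  - by move=> x Px; have [] := GPQ _ _ (spec _ Px).
have [ranQ|] := pselect (forall b, Q b -> exists a, G (a, b)).
  right; exists (fun b => epsilon (inhabits t0) (fun a => G (a, b))).
  have spec y : Q y -> G (epsilon (inhabits t0) (fun x => G (x, y)), y).
    by move=> Qb; exact: (epsilon_spec (inhabits t0) (fun x => G (x, y)) (ranQ y Qb)).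
  split.
  - move=> x y Px Py E; have := spec _ Py; have := spec _ Px; rewrite E.
    by move=> H1 H2; exact: Gf H1 H2.
  - by move=> x Px; have [] := GPQ _ _ (spec _ Px).
move=> /existsNP [b /not_implyP [Qb nb]] /existsNP [a /not_implyP [Pa na]].
exfalso.
pose G' := G `|` [set (a, b)].
have gG' : goodG G'.
  split.
  - by move=> x y [/GPQ//|[-> ->]].
  - move=> x y y' [H1|[e1 e2]] [H2|[e3 e4]]; subst => //; eauto.
    + by exfalso; apply: na; exists y.
    + by exfalso; apply: na; exists y'.
  - move=> x x' y [H1|[e1 e2]] [H2|[e3 e4]]; subst => //; eauto.
    + by exfalso; apply: nb; exists x.
    + by exfalso; apply: nb; exists x'.
have /asboolP := Gmax (exist _ G' gG') (asboolT (fun p Hp => or_introl Hp)).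
by move=> /(_ (a, b) (or_intror erefl)) /= Gab; apply: na; exists b.
Qed.
End Compar.

Set Implicit Arguments. Unset Strict Implicit. Unset Printing Implicit Defensive.
Local Open Scope classical_set_scope.
Local Open Scope card_scope.

Lemma card_le_fun {T U} (A : set T) (B : set U) (u0 : U) :
  A #<= B -> exists f : T -> U, injon A f /\ mapsto A B f.
Proof.
move/card_leP => [g].
exists (fun x => match pselect (A x) with left h => set_val (g (SigSub (mem_set h))) | right _ => u0 end).
split.
- move=> x y Ax Ay /=.
  case: pselect => // hx; case: pselect => // hy E.
  rewrite set_valE in E; have := val_inj E.
  move/(@inj _ _ _ g (SigSub (mem_set hx)) (SigSub (mem_set hy)) (in_setT _) (in_setT _)).
  by case.
- move=> x Ax /=; case: pselect => // hx; exact: set_valP.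
Qed.

Lemma fun_card_le {T U} (A : set T) (B : set U) :
  (exists f : T -> U, injon A f /\ mapsto A B f) -> A #<= B.
Proof.
move=> [f [fi fm]].
have : $|{injfun A >-> B}|.
  apply/injfunPex; exists f; first by move=> x; apply: fm.
  by move=> x y /set_mem Ax /set_mem Ay; apply: fi.
by case=> g; exact: inj_card_le g.
Qed.

Definition cnt {T : Type} (A : set T) : nat := #|` fset_set (A : set {classic T})|.

Lemma fin_cnt {T} (A : set T) : finite_set A -> A #= `I_(cnt A).
Proof.
move=> /finite_setP [n An]; rewrite /cnt.
by rewrite (@card_fset_set {classic T} A n An).
Qed.

Lemma cnt_le {T U} (A : set T) (B : set U) :
  A #<= B -> finite_set B -> (cnt A <= cnt B)%N.
Proof.
move=> AB fB; have fA := card_le_finite AB fB.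
have [_ h1] := (proj1 (card_eqPle _ _) (fin_cnt fA)).
have [h2 _] := (proj1 (card_eqPle _ _) (fin_cnt fB)).
by have := card_le_trans (card_le_trans h1 AB) h2; rewrite card_le_II.
Qed.

Lemma cnt_union {T} (A B : set T) : finite_set A -> finite_set B ->
  A `&` B = set0 -> cnt (A `|` B) = (cnt A + cnt B)%N.
Proof.
move=> fA fB AB; rewrite /cnt.
rewrite (@fset_setU {classic T} A B fA fB).
apply/eqP; rewrite -(@eqn_add2r (#|` (fset_set (A : set {classic T}) `&` fset_set (B : set {classic T}))%fset|)).
by rewrite cardfsUI -(@fset_setI {classic T} A B) ?AB ?fset_set0 ?cardfs0 ?addn0 //.
Qed.

Lemma cnt0 {T} : cnt (@set0 T) = 0%N.
Proof. by rewrite /cnt fset_set0 cardfs0. Qed.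

Lemma window_fin {U} (P : set U) (lv : U -> nat) a b :
  (forall m, (a <= m < b)%N -> finite_set [set u | P u /\ lv u = m]) ->
  finite_set [set u | P u /\ (a <= lv u < b)%N] /\
  cnt [set u | P u /\ (a <= lv u < b)%N] =
    (\sum_(a <= m < b) cnt [set u | P u /\ lv u = m])%N.
Proof.
elim: b => [|b IH] fin.
  have -> : [set u | P u /\ (a <= lv u < 0)%N] = set0.
    by apply/seteqP; split => u //= [_ /andP[_]].
  by rewrite big_geq // cnt0; split => //; exact: finite_set0.
have [ab|ba] := leqP a b; last first.
  have -> : [set u | P u /\ (a <= lv u < b.+1)%N] = set0.
    apply/seteqP; split => u //= [_ /andP[H1 H2]].
    lia.
  by rewrite big_geq // cnt0; split => //; exact: finite_set0.
have [fw cw] : finite_set [set u | P u /\ (a <= lv u < b)%N] /\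
  cnt [set u | P u /\ (a <= lv u < b)%N] = (\sum_(a <= m < b) cnt [set u | P u /\ lv u = m])%N.
  by apply: IH => m /andP[h1 h2]; apply: fin; rewrite h1 /=; lia.
have fb : finite_set [set u | P u /\ lv u = b].
  by apply: fin; rewrite ab /=.
have -> : [set u | P u /\ (a <= lv u < b.+1)%N] =
   [set u | P u /\ (a <= lv u < b)%N] `|` [set u | P u /\ lv u = b].
  apply/seteqP; split => u /=.
  - move=> [Pu /andP[h1]]; rewrite ltnS leq_eqVlt => /orP[/eqP->|h2]; first by right.
    by left; rewrite h1 h2.
  - move=> [[Pu /andP[h1 h2]]|[Pu ->]]; split => //; first by rewrite h1 /=; lia.
    by rewrite ab /=.
split; first by rewrite finite_setU.
rewrite cnt_union //; first by rewrite big_nat_recr //= cw.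
apply/seteqP; split => u //= [[_ /andP[_ h]] [_ e]]; by move: h; rewrite e ltnn.
Qed.

Set Implicit Arguments. Unset Strict Implicit. Unset Printing Implicit Defensive.
Local Open Scope classical_set_scope.
Local Open Scope card_scope.

Lemma infinite_fun {Y} (A : set Y) : infinite_set A ->
  exists c : nat -> Y, injon setT c /\ mapsto setT A c.
Proof.
move=> iA; have [y0 _] := infinite_setN0 iA.
by apply: card_le_fun y0 _; apply/infiniteP.
Qed.

Lemma finite_fun {Y} (A : set Y) : finite_set A ->
  exists e : Y -> nat, injon A e.
Proof.
move=> fA; have [h _] := proj1 (card_eqPle _ _) (fin_cnt fA).
by have [e [ei _]] := card_le_fun 0%N h; exists e.
Qed.

Section Absorb.
Variables (Y : Type) (A : set Y).

Definition DomG (G : set ((Y * nat) * Y)) := [set y | exists n z, G ((y, n), z)].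

Definition goodA (G : set ((Y * nat) * Y)) :=
  [/\ (forall y n z, G ((y, n), z) -> [/\ A y, A z & DomG G z]),
      (forall y n z z', G ((y, n), z) -> G ((y, n), z') -> z = z'),
      (forall p p' z, G (p, z) -> G (p', z) -> p = p') &
      (forall y n, DomG G y -> exists z, G ((y, n), z))].

Lemma absorb : infinite_set A ->
  exists psi : Y -> nat -> Y, (forall y n, A y -> A (psi y n)) /\
    (forall y n y' n', A y -> A y' -> psi y n = psi y' n' -> y = y' /\ n = n').
Proof.
move=> iA; have [y0 _] := infinite_setN0 iA.
pose GT := {G : set ((Y * nat) * Y) | goodA G}.
have g0 : goodA set0.
  by split => // y n [m [z []]].
pose R := fun x y : GT => `[< proj1_sig x `<=` proj1_sig y >].
have [[G gG] Gmax] : exists t : GT, premaximal R t.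
  apply: (@ZL_preorder _ (exist _ set0 g0)).
  - by move=> t; apply/asboolP.
  - by move=> r s t /asboolP rs /asboolP st; apply/asboolP => x /rs /st.
  move=> C Ctot.
  pose U := fun p => exists x : GT, C x /\ proj1_sig x p.
  have domU (x : GT) : C x -> DomG (proj1_sig x) `<=` DomG U.
    by move=> Cx y [n [z H]]; exists n, z, x.
  have gU : goodA U.
    split.
    - move=> y n z [x [Cx Hx]]; case: x Cx Hx => x [g1 g2 g3 g4] /= Cx Hx.
      have [? ? Dz] := g1 _ _ _ Hx; split => //.
      exact: (domU (exist _ x (And4 g1 g2 g3 g4)) Cx).
    - move=> y n z z' [x [Cx Hx]] [w [Cw Hw]].
      have [/asboolP xw|/asboolP wx] := Ctot _ _ Cx Cw.
      + by case: w Cw Hw xw => w [? g2 ? ?] /= _ Hw xw; apply: g2 (xw _ Hx) Hw.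
      + by case: x Cx Hx wx => x [? g2 ? ?] /= _ Hx wx; apply: g2 Hx (wx _ Hw).
    - move=> p p' z [x [Cx Hx]] [w [Cw Hw]].
      have [/asboolP xw|/asboolP wx] := Ctot _ _ Cx Cw.
      + by case: w Cw Hw xw => w [? ? g3 ?] /= _ Hw xw; apply: g3 (xw _ Hx) Hw.
      + by case: x Cx Hx wx => x [? ? g3 ?] /= _ Hx wx; apply: g3 Hx (wx _ Hw).
    - move=> y n [m [z [x [Cx Hx]]]].
      case: x Cx Hx => x [g1 g2 g3 g4] /= Cx Hx.
      have [z' Hz'] := g4 y n (ex_intro _ m (ex_intro _ z Hx)).
      by exists z', (exist _ x (And4 g1 g2 g3 g4)).
  exists (exist _ U gU) => s Cs; apply/asboolP => p Hp /=; by exists s.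
case: gG => [G1 G2 G3 G4] in Gmax *.
pose F := A `\` DomG G.
have fF : finite_set F.
  apply: contrapT => iF.
  have [c [ci cm]] := infinite_fun iF.
  pose G' := fun p => G p \/ exists i n, p = ((c i, n), c (choice.pickle (i, n))).
  have DomGc i : DomG G' (c i) by exists 0%N, (c (choice.pickle (i, 0%N))); right; exists i, 0%N.
  have DomGG : DomG G `<=` DomG G' by move=> y [n [z H]]; exists n, z; left.
  have gG' : goodA G'.
    split.
    - move=> y n z [H|[i [m [= e1 e2 e3]]]].
      + by have [? ? ?] := G1 _ _ _ H; split => //; apply: DomGG.
      + subst; have [? _] := cm i I; have [? _] := cm (choice.pickle (i, m)) I.
        by split.
    - move=> y n z z' [H|[i [m [= e1 e2 e3]]]] [H'|[i' [m' [= e1' e2' e3']]]]; subst.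
      + exact: G2 H H'.
      + by exfalso; have [_ /=] := cm i' I; apply; exists m', z; exact: H.
      + by exfalso; have [_ /=] := cm i I; apply; exists m, z'; exact: H'.
      + by rewrite (ci _ _ I I e1').
    - move=> p p' z [H|[i [m [= e1 e2]]]] [H'|[i' [m' [= e1' e2']]]]; subst.
      + exact: G3 H H'.
      + by exfalso; case: p H => [y n] H; have [_ _ Dz] := G1 _ _ _ H; have [_ /=] := cm (choice.pickle (i', m')) I.
      + by exfalso; case: p' H' => [y n] H; have [_ _ Dz] := G1 _ _ _ H; have [_ /=] := cm (choice.pickle (i, m)) I.
      + have := ci _ _ I I e2'; move/(pcan_inj (@choice.pickleK _)) => [-> ->] //.
    - move=> y n [m [z [H|[i [k [= e1 e2 e3]]]]]].
      + by have [z' Hz'] := G4 y n (ex_intro _ m (ex_intro _ z H)); exists z'; left.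
      + subst; exists (c (choice.pickle (i, n))); right; exists i, n.
        by [].
  have /asboolP := Gmax (exist _ G' gG') (asboolT (fun p Hp => or_introl Hp)).
  move=> /(_ ((c 0%N, 0%N), c (choice.pickle (0%N, 0%N)))) /=.
  have : G' ((c 0%N, 0%N), c (choice.pickle (0%N, 0%N))) by right; exists 0%N, 0%N.
  move=> /[swap]/[apply] H; have [_ /=] := cm 0%N I; apply.
  by exists 0%N, (c (choice.pickle (0%N, 0%N))).
have iD : infinite_set (DomG G).
  move=> fD; apply: iA; have : finite_set (DomG G `|` F) by rewrite finite_setU.
  apply: sub_finite_set => y Ay.
  by have [?|?] := pselect (DomG G y); [left|right].
have [d [di dm]] := infinite_fun iD.
have [e ei] := finite_fun fF.
pose gimg y n := epsilon (inhabits y0) (fun z => G ((y, n), z)).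
have gimgP y n : DomG G y -> G ((y, n), gimg y n).
  by move=> Dy; exact: (epsilon_spec (inhabits y0) (fun z => G ((y, n), z)) (G4 y n Dy)).
exists (fun y n => if pselect (DomG G y) then gimg y (2 * n)%N else gimg (d (e y)) (2 * n).+1).
split.
- move=> y n Ay; case: pselect => Dy.
  + by have [] := G1 _ _ _ (gimgP y (2 * n)%N Dy).
  + by have [] := G1 _ _ _ (gimgP (d (e y)) (2 * n).+1 (dm _ I)).
- move=> y n y' n' Ay Ay'.
  case: pselect => Dy; case: pselect => Dy' /= E.
  + have H1 := gimgP y (2 * n)%N Dy; have H2 := gimgP y' (2 * n')%N Dy'.
    rewrite -E in H2; have := G3 _ _ _ H1 H2.
    by case => -> /eqP; rewrite eqn_mul2l /= => /eqP ->.
  + have H1 := gimgP y (2 * n)%N Dy; have H2 := gimgP _ (2 * n').+1 (dm (e y') I).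
    rewrite -E in H2; have := G3 _ _ _ H1 H2.
    by case => _ /(congr1 odd); rewrite !mul2n /= !odd_double.
  + have H1 := gimgP _ (2 * n).+1 (dm (e y) I); have H2 := gimgP y' (2 * n')%N Dy'.
    rewrite -E in H2; have := G3 _ _ _ H1 H2.
    by case => _ /(congr1 odd); rewrite !mul2n /= !odd_double.
  + have H1 := gimgP _ (2 * n).+1 (dm (e y) I); have H2 := gimgP _ (2 * n').+1 (dm (e y') I).
    rewrite -E in H2; have := G3 _ _ _ H1 H2.
    case => /(di _ _ I I) /(ei _ _ (conj Ay Dy) (conj Ay' Dy')) -> [] /eqP.
    by rewrite eqn_mul2l /= => /eqP ->.
Qed.
End Absorb.

Set Implicit Arguments. Unset Strict Implicit. Unset Printing Implicit Defensive.
Local Open Scope classical_set_scope.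

Section Rank.
Variables (T S : Type) (AF : set T) (BF : set S) (lt : T -> nat) (ls : S -> nat)
  (x y : nat -> nat) (idx : T -> nat) (el : nat -> nat -> S).
Hypotheses (idxi : forall t t', AF t -> AF t' -> lt t = lt t' -> idx t = idx t' -> t = t')
  (idxb : forall t, AF t -> idx t < x (lt t))
  (elP : forall m i, i < y m -> BF (el m i) /\ ls (el m i) = m)
  (eli : forall m i i', i < y m -> i' < y m -> el m i = el m i' -> i = i')
  (hyp : forall c d, \sum_(c <= j < d.+1) x j <= \sum_(c.-1 <= m < d.+2) y m).

Let Yc m := \sum_(0 <= i < m) y i.

Fixpoint start j := if j is j'.+1 then maxn (start j' + x j') (Yc j') else 0.

Lemma YcS m : Yc m.+1 = Yc m + y m.
Proof. by rewrite /Yc big_nat_recr. Qed.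

Lemma Yc_mono m m' : m <= m' -> Yc m <= Yc m'.
Proof.
elim: m' => [|m' IH]; first by rewrite leqn0 => /eqP->.
rewrite leq_eqVlt => /orP[/eqP->//|]; rewrite ltnS => /IH; rewrite YcS; lia.
Qed.

Lemma startQ j : exists2 c, c <= j &
  start j + x j = Yc c.-1 + \sum_(c <= i < j.+1) x i.
Proof.
elim: j => [|j [c cj IH]]; first by exists 0 => //; rewrite big_nat1 /Yc big_geq.
rewrite /= /maxn; case: ltnP => H.
- exists j.+1 => //; rewrite big_nat1 /=; lia.
- exists c; first lia.
  by rewrite big_nat_recr /=; [lia|lia].
Qed.

Lemma start_bound j : start j + x j <= Yc j.+2.
Proof.
have [c cj ->] := startQ j.
have := hyp c j.
rewrite /Yc (@big_cat_nat _ _ _ c.-1 0 j.+2) //=; [lia|lia].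
Qed.

Lemma start_low j : Yc j.-1 <= start j.
Proof. case: j => [|j] /=; [by rewrite /Yc big_geq|lia]. Qed.

Lemma start_mono j j' : j < j' -> start j + x j <= start j'.
Proof.
elim: j' => // j' IH; rewrite ltnS leq_eqVlt => /orP[/eqP->/=|/IH]; first lia.
move=> /= H; lia.
Qed.

Definition lvlS q := if pselect (exists m, q < Yc m.+1) is left h then ex_minn h else 0.

Lemma lvlSP q K : q < Yc K ->
  [/\ Yc (lvlS q) <= q, q < Yc (lvlS q) + y (lvlS q) &
      forall m, q < Yc m.+1 -> lvlS q <= m].
Proof.
move=> qK.
have ex : exists m, q < Yc m.+1.
  by exists K; apply: leq_trans qK (Yc_mono (leqnSn K)).
rewrite /lvlS; case: pselect => // h.
case: ex_minnP => m Hm mmin; split => //.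
- case: m Hm mmin => [|m] Hm mmin; first by rewrite /Yc big_geq.
  by rewrite leqNgt; apply/negP => /mmin; rewrite ltnn.
- by rewrite -YcS.
Qed.

Definition getS q := el (lvlS q) (q - Yc (lvlS q)).

Definition qv t := start (lt t) + idx t.
Definition rankf t := getS (qv t).

Lemma rank_inj : exists f : T -> S, injon AF f /\ mapsto AF BF f /\
  (forall t, AF t -> lt t <= (ls (f t)).+1 /\ ls (f t) <= (lt t).+1).
Proof.
have qP t : AF t ->
   [/\ Yc (lvlS (qv t)) <= qv t, qv t < Yc (lvlS (qv t)) + y (lvlS (qv t)),
       lvlS (qv t) <= (lt t).+1 & (lt t).-1 <= lvlS (qv t)].
  move=> At; have qb : qv t < Yc (lt t).+2.
    by have := idxb At; have := start_bound (lt t); rewrite /qv; lia.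
  have [H1 H2 H3] := lvlSP qb; split => //; first exact: H3.
  rewrite leqNgt; apply/negP => H.
  have : Yc (lvlS (qv t)).+1 <= Yc (lt t).-1 by apply: Yc_mono.
  have := start_low (lt t); have : start (lt t) <= qv t by rewrite /qv; lia.
  rewrite YcS; lia.
exists rankf; split; [|split].
- move=> t t' At At'; rewrite /rankf /getS.
  have [a1 a2 _ _] := qP t At; have [b1 b2 _ _] := qP t' At'.
  move=> E.
  have Ei : lvlS (qv t) = lvlS (qv t').
    have := @elP (lvlS (qv t)) (qv t - Yc (lvlS (qv t))) ltac:(lia); rewrite E => -[_ <-].
    by have [_ ->] := @elP (lvlS (qv t')) (qv t' - Yc (lvlS (qv t'))) ltac:(lia).
  move: a1 a2 E; rewrite Ei => a1 a2 E.
  have eqq : qv t - Yc (lvlS (qv t')) = qv t' - Yc (lvlS (qv t')) by apply: eli E; lia.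
  have : qv t = qv t' by lia.
  rewrite /qv => qq.
  have [lt_ll|gt_ll|eq_ll] := ltngtP (lt t) (lt t').
  + have := start_mono lt_ll; have := idxb At; lia.
  + have := start_mono gt_ll; have := idxb At'; lia.
  + apply: idxi => //; rewrite eq_ll in qq; lia.
- move=> t At; rewrite /rankf /getS; have [a1 a2 _ _] := qP t At.
  by have [] := @elP (lvlS (qv t)) (qv t - Yc (lvlS (qv t))) ltac:(lia).
- move=> t At; rewrite /rankf /getS; have [a1 a2 a3 a4] := qP t At.
  have [_ ->] := @elP (lvlS (qv t)) (qv t - Yc (lvlS (qv t))) ltac:(lia).
  lia.
Qed.
End Rank.

Set Implicit Arguments. Unset Strict Implicit. Unset Printing Implicit Defensive.

Section FarSum.
Variables (inf : nat -> Prop) (x y : nat -> nat).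
Let near j := exists m, (j.-1 <= m <= j.+1)%N /\ inf m.
Hypotheses (x0 : forall j, near j -> x j = 0%N) (y0 : forall m, inf m -> y m = 0%N)
  (base : forall c e, (c < e)%N -> (forall j, (c <= j < e)%N -> ~ near j) ->
     (\sum_(c <= j < e) x j <= \sum_(c.-1 <= m < e.+1) y m)%N).

Lemma far_sum c e : (\sum_(c <= j < e) x j <= \sum_(c.-1 <= m < e.+1) y m)%N.
Proof.
move: {2}(e - c)%N (leqnn (e - c)%N) => n; elim: n c e => [|n IH] c e hn.
  by rewrite big_geq //; lia.
have [ec|ce] := leqP e c; first by rewrite big_geq.
have [[m [/andP[cm me] im]]|noinf] := pselect (exists m, (c <= m < e)%N /\ inf m).
  rewrite (@big_cat_nat _ _ _ m) //=; last by lia.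
  rewrite (@big_ltn _ _ _ m e _ me) x0; last by exists m; split => //; lia.
  rewrite (@big_cat_nat _ _ _ m.+1 c.-1 e.+1) /=; [|lia|lia].
  have h1 := IH c m ltac:(lia); have h2 := IH m.+1 e ltac:(lia).
  move: h2; rewrite /= (@big_ltn _ _ _ m e.+1) ?y0 //; [lia|lia].
have [nc|nnc] := pselect (near c).
  rewrite (@big_ltn _ _ _ c e _ ce) x0 // add0n.
  have h := IH c.+1 e ltac:(lia); move: h => /= h.
  rewrite (@big_cat_nat _ _ _ c c.-1 e.+1) /=; [lia|lia|lia].
have [ne|nne] := pselect (near e.-1).
  have H1 : (c <= e.-1)%N by lia.
  have H2 : (e.-1 <= e)%N by lia.
  have H3 : (e.-1 < e)%N by lia.
  have H4 : (e <= e.-1.+1)%N by lia.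
  rewrite (@big_cat_nat _ _ _ e.-1 c e _ _ H1 H2) /=.
  rewrite (@big_ltn _ _ _ e.-1 e _ H3) x0 // (big_geq H4) !addn0.
  have h := IH c e.-1 ltac:(lia).
  have H5 : (c.-1 <= e)%N by lia.
  have H6 : (e <= e.+1)%N by lia.
  rewrite (@big_cat_nat _ _ _ e c.-1 e.+1 _ _ H5 H6) /=.
  have := leq_addr (\sum_(e <= i < e.+1) y i) (\sum_(c.-1 <= i < e) y i).
  have eE : e.-1.+1 = e by lia.
  rewrite eE in h; lia.
apply: base => // j /andP[cj je] [m [/andP[h1 h2] im]].
have [cm|mc] := leqP c m.
  have [me|em] := ltnP m e; first by apply: noinf; exists m; rewrite cm me.
  apply: nne; exists m; split => //; apply/andP; split; lia.
apply: nnc; exists m; split => //; apply/andP; split; lia.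
Qed.
End FarSum.

Set Implicit Arguments. Unset Strict Implicit. Unset Printing Implicit Defensive.
Local Open Scope classical_set_scope.
Local Open Scope card_scope.

Section Inj.
Variables (T S : Type) (s0 : S) (A : set T) (lt : T -> nat) (ls : S -> nat).
Hypothesis hyp : forall a b,
  [set t | A t /\ (a <= lt t <= b)%N] #<= [set s | (a.-1 <= ls s <= b.+1)%N].

Definition Ym m := [set s : S | setT s /\ ls s = m].
Definition infl m := infinite_set (Ym m).
Definition Xj j := [set t | A t /\ lt t = j].
Definition nearl j := exists m, (j.-1 <= m <= j.+1)%N /\ infl m.

Lemma Xj_le j : Xj j #<= [set s : S | setT s /\ (j.-1 <= ls s < j.+2)%N].
Proof.
apply: card_le_trans (card_le_trans (hyp j j) _).
  by apply: subset_card_le => t [At <-]; split => //; rewrite leqnn.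
by apply: subset_card_le => s /= h; split.
Qed.

Lemma not_infl m : ~ infl m -> finite_set (Ym m).
Proof. by move=> h; apply: contrapT. Qed.

Lemma far_fin j : ~ nearl j -> finite_set (Xj j).
Proof.
move=> nj; apply: card_le_finite (Xj_le j) _.
have [] := @window_fin S setT ls j.-1 j.+2; last by [].
move=> m /andP[h1 h2]; apply: not_infl => im; apply: nj; exists m; split => //.
by rewrite h1 /=; lia.
Qed.

Definition xf j := if pselect (nearl j) then 0%N else cnt (Xj j).
Definition yf m := if pselect (infl m) then 0%N else cnt (Ym m).

Lemma far_sum_hyp c d :
  (\sum_(c <= j < d.+1) xf j <= \sum_(c.-1 <= m < d.+2) yf m)%N.
Proof.
apply: (@far_sum infl xf yf).
- by move=> j nj; rewrite /xf; case: pselect.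
- by move=> m im; rewrite /yf; case: pselect.
move=> {d} c e ce allfar.
have [fX cX] := @window_fin T A lt c e (fun j hj => far_fin (allfar j hj)).
have fin_lv : forall m, (c.-1 <= m < e.+1)%N -> ~ infl m.
  move=> m /andP[h1 h2] im.
  have [mc|cm] := ltnP m c.
    by apply: (allfar c); [rewrite leqnn /=|exists m; split => //; apply/andP; split]; lia.
  have [me|em] := ltnP m e.
    by apply: (allfar m); [rewrite cm me|exists m; split => //; apply/andP; split]; lia.
  by apply: (allfar e.-1); [apply/andP; split|exists m; split => //; apply/andP; split]; lia.
have [fY cY] := @window_fin S setT ls c.-1 e.+1 (fun m hm => not_infl (fin_lv m hm)).
have -> : (\sum_(c <= j < e) xf j = \sum_(c <= j < e) cnt (Xj j))%N.
  by apply: eq_big_nat => j hj; rewrite /xf; case: pselect => [h|//]; exfalso; exact: allfar j hj h.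
have -> : (\sum_(c.-1 <= m < e.+1) yf m = \sum_(c.-1 <= m < e.+1) cnt (Ym m))%N.
  by apply: eq_big_nat => m hm; rewrite /yf; case: pselect => [h|//]; exfalso; exact: fin_lv m hm h.
rewrite -cX -cY; apply: cnt_le fY.
apply: card_le_trans (card_le_trans (hyp c e.-1) _).
  by apply: subset_card_le => t [At /andP[h1 h2]]; split => //; apply/andP; split; lia.
by apply: subset_card_le => s /= /andP[h1 h2]; split => //; apply/andP; split; lia.
Qed.


Definition AF := [set t | A t /\ ~ nearl (lt t)].
Definition BF := [set s : S | ~ infl (ls s)].

Lemma far_part : exists f : T -> S, injon AF f /\ mapsto AF BF f /\
  (forall t, AF t -> (lt t <= (ls (f t)).+1)%N /\ (ls (f t) <= (lt t).+1)%N).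
Proof.
have /boolp.choice [E HE] : forall j, exists e : T -> nat,
   ~ nearl j -> injon (Xj j) e /\ mapsto (Xj j) `I_(cnt (Xj j)) e.
  move=> j; have [nj|nj] := pselect (nearl j); first by exists (fun _ => 0%N).
  have [h _] := proj1 (card_eqPle _ _) (fin_cnt (far_fin nj)).
  have [e [ei em]] := card_le_fun 0%N h; by exists e.
have /boolp.choice [G HG] : forall m, exists g : nat -> S,
   ~ infl m -> injon `I_(cnt (Ym m)) g /\ mapsto `I_(cnt (Ym m)) (Ym m) g.
  move=> m; have [im|im] := pselect (infl m); first by exists (fun _ => s0).
  have [_ h] := proj1 (card_eqPle _ _) (fin_cnt (not_infl im)).
  have [g [gi gm]] := card_le_fun s0 h; by exists g.
have := @rank_inj T S AF BF lt ls xf yf (fun t => E (lt t) t) G.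
case.
- move=> t t' [At nt] [At' nt'] ll; rewrite -ll => ee.
  by have [ei _] := HE _ nt; apply: ei => //; split.
- move=> t [At nt]; rewrite /xf; case: pselect => [h|h]; first by case: nt.
  by have [_ em] := HE _ nt; apply: em; split.
- move=> m i; rewrite /yf; case: pselect => [//|im] hi.
  have [_ gm] := HG _ im; have [_ e] := gm i hi; split => //.
  by rewrite /BF /= e.
- move=> m i i'; rewrite /yf; case: pselect => [//|im] hi hi'.
  by have [gi _] := HG _ im; apply: gi.
- exact: far_sum_hyp.
by move=> f hf; exists f.
Qed.

Definition AN := [set t | A t /\ nearl (lt t)].

Lemma near_part : exists f : T -> S, injon AN f /\
  (forall t, AN t -> infl (ls (f t)) /\ (lt t <= (ls (f t)).+1)%N /\ (ls (f t) <= (lt t).+1)%N).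
Proof.
have /boolp.choice [phi Hphi] : forall j, exists p : T -> S,
   injon (Xj j) p /\ mapsto (Xj j) [set s | (j.-1 <= ls s <= j.+1)%N] p.
  move=> j; apply: card_le_fun s0 _.
  apply: card_le_trans (hyp j j).
  by apply: subset_card_le => t [At <-]; split => //; rewrite leqnn.
have /boolp.choice [ms Hms] : forall j, exists m, nearl j -> (j.-1 <= m <= j.+1)%N /\ infl m.
  move=> j; have [[m hm]|nj] := pselect (nearl j); first by exists m.
  by exists 0%N.
have /boolp.choice [psi Hpsi] : forall m, exists p : S -> nat -> S, infl m ->
   (forall y n, Ym m y -> Ym m (p y n)) /\
   (forall y n y' n', Ym m y -> Ym m y' -> p y n = p y' n' -> y = y' /\ n = n').
  move=> m; have [im|im] := pselect (infl m); last by exists (fun _ _ => s0).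
  have [p hp] := absorb im; by exists p.
have /boolp.choice [bs Hbs] : forall m, exists b, infl m -> Ym m b.
  move=> m; have [im|im] := pselect (infl m); last by exists s0.
  have [b hb] := infinite_setN0 im; by exists b.
pose Ej j := [set t | Xj j t /\ ~ infl (ls (phi j t))].
have /boolp.choice [ee Hee] : forall j, exists e : T -> nat, injon (Ej j) e.
  move=> j; apply: finite_fun.
  have [|fw _] := @window_fin S [set s | ~ infl (ls s)] ls j.-1 j.+2.
    move=> m _; have [im|im] := pselect (infl m).
      have -> : [set u | ~ infl (ls u) /\ ls u = m] = set0.
        by apply/seteqP; split => u // [h e]; apply: h; rewrite e.
      exact: finite_set0.
    by apply: sub_finite_set (not_infl im) => u [_ e]; split.
  apply: card_le_finite fw; apply: fun_card_le; exists (phi j); split.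
    by move=> t t' [ht _] [ht' _]; apply: (proj1 (Hphi j)).
  by move=> t [ht nt]; split => //; exact: (proj2 (Hphi j)) t ht.
pose fN t := let j := lt t in let s := phi j t in
  if pselect (infl (ls s)) then psi (ls s) s (j.+1 - ls s)%N
  else psi (ms j) (bs (ms j)) (3 + 3 * ee j t + (j.+1 - ms j))%N.
have fNP t : AN t -> exists m b k, [/\ fN t = psi m b k, infl m, Ym m b,
   ((lt t).-1 <= m <= (lt t).+1)%N &
   (b = phi (lt t) t /\ k = ((lt t).+1 - m)%N /\ (k < 3)%N) \/
   (b = bs m /\ m = ms (lt t) /\ ~ infl (ls (phi (lt t) t)) /\
    k = (3 + 3 * ee (lt t) t + ((lt t).+1 - m))%N)].
  move=> [At nt]; have Xt : Xj (lt t) t by [].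
  have /= /andP[w1 w2] := proj2 (Hphi (lt t)) t Xt.
  rewrite /fN /=; case: pselect => im.
    exists (ls (phi (lt t) t)), (phi (lt t) t), ((lt t).+1 - ls (phi (lt t) t))%N.
    split; [by []|exact: im|by split|by rewrite w1 w2|left; split => //; split => //; lia].
  have [h1 h2] := Hms _ nt.
  exists (ms (lt t)), (bs (ms (lt t))), (3 + 3 * ee (lt t) t + ((lt t).+1 - ms (lt t)))%N.
  by split => //; [exact: Hbs|right].
exists fN; split.
- move=> t t' Nt Nt'.
  have [m [b [k [e1 im Yb mb H]]]] := fNP t Nt.
  have [m' [b' [k' [e1' im' Yb' mb' H']]]] := fNP t' Nt'.
  rewrite e1 e1' => E.
  have lE : m = m'.
    have [pm _] := Hpsi m im; have [pm' _] := Hpsi m' im'.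
    by have [_ <-] := pm b k Yb; rewrite E; have [_ ->] := pm' b' k' Yb'.
  subst m'.
  have [_ pinj] := Hpsi m im.
  have [eb ek] := pinj _ _ _ _ Yb Yb' E.
  subst b' k'.
  have [[eb1 [ek1 k3]]|[eb1 [em1 [ni1 ek1]]]] := H;
  have [[eb2 [ek2 k3']]|[eb2 [em2 [ni2 ek2]]]] := H'.
  + have ll : lt t = lt t' by lia.
    case: Nt => At _; case: Nt' => At' _.
    apply: (proj1 (Hphi (lt t))); [by split|by split|by rewrite -eb1 eb2 -ll].
  + lia.
  + lia.
  + have ll : lt t = lt t' by lia.
    have eq_ee : ee (lt t) t = ee (lt t') t' by lia.
    case: Nt => At _; case: Nt' => At' _.
    apply: (Hee (lt t)); [by split|split; rewrite ?ll //|by rewrite eq_ee ll].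
- move=> t Nt; have [m [b [k [e1 im Yb /andP[mb1 mb2] H]]]] := fNP t Nt.
  have [pm _] := Hpsi m im; have [_ e2] := pm b k Yb.
  by rewrite e1 e2; split => //; split; lia.
Qed.

Lemma inj_levels : exists f : T -> S, injon A f /\
  (forall t, A t -> (lt t <= (ls (f t)).+1)%N /\ (ls (f t) <= (lt t).+1)%N).
Proof.
have [fF [fFi [fFm fFd]]] := far_part.
have [fN [fNi fNd]] := near_part.
exists (fun t => if pselect (nearl (lt t)) then fN t else fF t); split.
- move=> t t' At At'.
  case: pselect => n1; case: pselect => n2 /= E.
  + by apply: fNi.
  + by exfalso; have [i1 _] := fNd t (conj At n1); have := fFm t' (conj At' n2); rewrite -E.
  + by exfalso; have [i1 _] := fNd t' (conj At' n2); have := fFm t (conj At n1); rewrite E.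
  + by apply: fFi.
- move=> t At; case: pselect => n1.
  + by have [_ ?] := fNd t (conj At n1).
  + exact: fFd.
Qed.
End Inj.

Set Implicit Arguments. Unset Strict Implicit. Unset Printing Implicit Defensive.
Local Open Scope classical_set_scope.

Section MD.
Variables (T S : Type) (t0 : T) (s0 : S) (A : set T) (B : set S) (f : T -> S) (g : S -> T).
Hypotheses (fi : injon A f) (gi : injon B g).

Fixpoint Cn n : set T :=
  if n is n'.+1 then [set t | exists x, Cn n' x /\ B (f x) /\ g (f x) = t /\ A t]
  else [set t | A t /\ ~ exists s, B s /\ g s = t].

Definition Cs := [set t | exists n, Cn n t].

Lemma CA t : Cs t -> A t.
Proof. by move=> [[|n] /=]; [case|move=> [x [_ [_ [_ ?]]]]]. Qed.

Lemma Cg s : B s -> Cs (g s) -> exists x, Cs x /\ f x = s.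
Proof.
move=> Bs [[|n] /=].
  by move=> [_ H]; exfalso; apply: H; exists s.
move=> [x [Cx [Bfx [e _]]]]; exists x; split; first by exists n.
by apply: gi.
Qed.

Definition ginv t := epsilon (inhabits s0) (fun s => B s /\ g s = t).
Definition finv s := epsilon (inhabits t0) (fun t => Cs t /\ f t = s).

Lemma ginvP s : B s -> ginv (g s) = s.
Proof.
move=> Bs; have [h1 h2] := epsilon_spec (inhabits s0) (fun s' => B s' /\ g s' = g s) (ex_intro _ s (conj Bs erefl)).
exact: gi.
Qed.

Lemma finvP x : Cs x -> finv (f x) = x.
Proof.
move=> Cx; have [h1 h2] := epsilon_spec (inhabits t0) (fun t => Cs t /\ f t = f x) (ex_intro _ x (conj Cx erefl)).
by apply: fi => //; apply: CA.
Qed.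

Definition fC := [set s | exists x, Cs x /\ f x = s].
Definition DT := Cs `|` [set t | exists s, [/\ B s, g s = t, ~ Cs t & ~ fC s]].
Definition DS := [set s | fC s \/ B s].
Definition mm t := if pselect (Cs t) then f t else ginv t.
Definition mm' s := if pselect (fC s) then finv s else g s.

Lemma MD_spec :
  A `<=` DT /\ B `<=` DS /\ mapsto DT DS mm /\ mapsto DS DT mm' /\
    (forall t, DT t -> mm' (mm t) = t) /\ (forall s, DS s -> mm (mm' s) = s) /\
    (forall t, DT t -> (A t /\ mm t = f t) \/ (B (mm t) /\ g (mm t) = t)).
Proof.
have nCg s : B s -> ~ fC s -> ~ Cs (g s) by move=> Bs nf /(Cg Bs).
split; [|split; [|split; [|split; [|split; [|split]]]]].
- move=> t At; have [Ct|nCt] := pselect (Cs t); first by left.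
  have [[s [Bs gs]]|ng] := pselect (exists s, B s /\ g s = t); last first.
    by exfalso; apply: nCt; exists 0%N.
  right; exists s; split => // -[x [[n Cx] fx]]; apply: nCt.
  by exists n.+1; exists x; rewrite fx.
- by move=> s Bs; right.
- move=> t [Ct|[s [Bs gs nC nf]]]; rewrite /mm; case: pselect => //= _.
  + by left; exists t.
  + by rewrite -gs ginvP //; right.
- move=> s [fs|Bs]; rewrite /mm'; case: pselect => H /=.
  + by case: H => x [Cx <-]; rewrite finvP //; left.
  + by [].
  + by case: H => x [Cx <-]; rewrite finvP //; left.
  + by right; exists s; split => //; apply: nCg.
- move=> t [Ct|[s [Bs gs nC nf]]]; rewrite /mm.
  + case: pselect => [_|h] /=; last by case: h.
    rewrite /mm'; case: pselect => [_|nf] /=; first exact: finvP.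
    by exfalso; apply: nf; exists t.
  + case: pselect => [h|_] /=; first by case: nC.
    rewrite -gs ginvP // /mm'; case: pselect => [h|_] //=.
- move=> s [fs|Bs]; rewrite /mm'.
  + case: pselect => [_|nf] /=; last by case: nf.
    case: fs => x [Cx <-]; rewrite finvP // /mm; case: pselect => [_|h] //=.
  + case: pselect => [[x [Cx e]]|nf] /=.
      by rewrite -e finvP // /mm; case: pselect => [_|h] //=.
    rewrite /mm; case: pselect => [h|_] /=; first by case: (nCg _ Bs nf h).
    exact: ginvP.
- move=> t [Ct|[s [Bs gs nC nf]]]; rewrite /mm.
  + case: pselect => [_|h] /=; last by case: h.
    by left; split => //; apply: CA.
  + case: pselect => [h|_] /=; first by case: nC.
    by right; rewrite -gs ginvP.
Qed.
End MD.

Set Implicit Arguments. Unset Strict Implicit. Unset Printing Implicit Defensive.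
Local Open Scope classical_set_scope.

Section Assemble.
Variables (T S : Type) (t0 : T) (s0 : S) (DT : set T) (DS : set S) (mm : T -> S) (mm' : S -> T).
Hypotheses (mmD : mapsto DT DS mm) (mm'D : mapsto DS DT mm')
  (K1 : forall t, DT t -> mm' (mm t) = t) (K2 : forall s, DS s -> mm (mm' s) = s).

Lemma assemble :
  (exists (I : Type) (eta : T + I -> S), bijective eta /\
     (forall t, (DT t /\ eta (inl t) = mm t) \/ (~ DT t /\ ~ DS (eta (inl t)))) /\
     (forall i, ~ DS (eta (inr i))))
  \/
  (exists (I : Type) (eta : T -> S + I), bijective eta /\
     forall t, match eta t with inl s => (DT t /\ s = mm t) \/ (~ DT t /\ ~ DS s)
                              | inr _ => ~ DT t end).
Proof.
have [[h [hi hm]]|[h [hi hm]]] := comparability (~` DT) (~` DS) t0 s0.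
- left.
  pose I := {s : S | ~ DS s /\ ~ (exists t, ~ DT t /\ h t = s)}.
  exists I.
  pose eta (x : T + I) := match x with
    | inl t => if pselect (DT t) then mm t else h t
    | inr i => proj1_sig i end.
  pose hinv s := epsilon (inhabits t0) (fun t => ~ DT t /\ h t = s).
  have hinvP t : ~ DT t -> hinv (h t) = t.
    move=> nt; have [h1 h2] := epsilon_spec (inhabits t0) (fun t' => ~ DT t' /\ h t' = h t)
        (ex_intro _ t (conj nt erefl)).
    exact: hi.
  pose inv s : T + I := match pselect (DS s) with
     | left _ => inl (mm' s)
     | right nD => match pselect (exists t, ~ DT t /\ h t = s) with
         | left _ => inl (hinv s)
         | right np => inr (exist _ s (conj nD np))
       end end.
  exists eta; split.
    exists inv.
    - case=> [t|[s [nD np]]] /=.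
      + case: pselect => Dt /=.
          by rewrite /inv; case: pselect => [_|nD]; [rewrite K1|case: nD; apply: mmD].
        rewrite /inv; case: pselect => [/(hm t Dt)//|nD] /=.
        case: pselect => [_|np]; first by rewrite hinvP.
        by case: np; exists t.
      + rewrite /inv; case: pselect => [//|nD'] /=.
        case: pselect => [//|np'] /=.
        by congr inr; congr exist; apply: Prop_irrelevance.
    - move=> s; rewrite /inv; destruct (pselect (DS s)) as [Ds|nD] => /=.
        by case: pselect => [h'|h'] /=; [rewrite K2|case: h'; apply: mm'D].
      destruct (pselect (exists t, ~ DT t /\ h t = s)) as [[t [nt e]]|np] => //=.
      by rewrite -e hinvP //; case: pselect => [h'|h'] //=; case: nD; rewrite -e.
  split.
  - move=> t /=; case: pselect => Dt; [by left|right; split => //; exact: hm].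
  - by case=> s [nD np].
- right.
  pose I := {t : T | ~ DT t /\ ~ (exists s, ~ DS s /\ h s = t)}.
  exists I.
  pose hinv t := epsilon (inhabits s0) (fun s => ~ DS s /\ h s = t).
  have hinvP s : ~ DS s -> hinv (h s) = s.
    move=> ns; have [h1 h2] := epsilon_spec (inhabits s0) (fun s' => ~ DS s' /\ h s' = h s)
        (ex_intro _ s (conj ns erefl)).
    exact: hi.
  pose eta t : S + I := match pselect (DT t) with
     | left _ => inl (mm t)
     | right nD => match pselect (exists s, ~ DS s /\ h s = t) with
         | left _ => inl (hinv t)
         | right np => inr (exist _ t (conj nD np))
       end end.
  pose inv (x : S + I) := match x with
    | inl s => if pselect (DS s) then mm' s else h s
    | inr i => proj1_sig i end.
  exists eta; split.
    exists inv.
    - move=> t; rewrite /eta; destruct (pselect (DT t)) as [Dt|nD] => /=.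
        by case: pselect => [h'|h'] /=; [rewrite K1|case: h'; apply: mmD].
      destruct (pselect (exists s, ~ DS s /\ h s = t)) as [[s [ns e]]|np] => //=.
      by rewrite -e hinvP //; case: pselect => [h'|h'] //=; case: nD; rewrite -e.
    - case=> [s|[t [nD np]]] /=.
      + case: pselect => Ds /=.
          by rewrite /eta; case: pselect => [_|nD]; [rewrite K2|case: nD; apply: mm'D].
        rewrite /eta; case: pselect => [/(hm s Ds)//|nD] /=.
        case: pselect => [_|np]; first by rewrite hinvP.
        by case: np; exists s.
      + rewrite /eta; case: pselect => [//|nD'] /=.
        case: pselect => [//|np'] /=.
        by congr inr; congr exist; apply: Prop_irrelevance.
  move=> t; rewrite /eta; destruct (pselect (DT t)) as [Dt|nD] => /=; first by left.
  destruct (pselect (exists s, ~ DS s /\ h s = t)) as [[s [ns e]]|np] => //=.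
  right; split => //; rewrite -e hinvP //.
Qed.
End Assemble.

Unset Implicit Arguments.
Set Implicit Arguments. Unset Strict Implicit.
Local Open Scope ring_scope.

Lemma arA1 (a b L : int) : L <= a -> L <= b ->
  (`|a - L|%N <= (`|b - L|%N).+1)%N -> a <= b + 1.
Proof. lia. Qed.

Lemma arA2 (N : nat) (a L : int) : L <= a -> L <= 0 ->
  ~ (`|(N%:Z + 1 - L)%R|%N <= `|a - L|%N)%N -> a <= N%:Z.
Proof. lia. Qed.

Lemma arA3 (k0 a : int) : k0 + 1 <= a -> k0 <= a - 1.
Proof. lia. Qed.

Lemma arA4 (a : int) : (a - 1 < a) && (a <= a - 1 + (1%N)%:Z).
Proof. apply/andP; split; lia. Qed.

Lemma arA5 (N : nat) (k L : int) : L <= 0 ->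
  L + (`|(N%:Z + 1 - L)%R|%N)%:Z - 1 <= k -> N%:Z <= k.
Proof. lia. Qed.

Lemma arA6 (N : nat) (a L : int) : L <= a -> L <= 0 ->
  (`|(N%:Z + 1 - L)%R|%N <= `|a - L|%N)%N -> N%:Z + 1 <= a.
Proof. lia. Qed.

Set Implicit Arguments. Unset Strict Implicit. Unset Printing Implicit Defensive.
Local Open Scope classical_set_scope.
Local Open Scope ring_scope.

Section Levels.
Variables (R : realType) (delta : R).
Hypotheses (d0 : 0 < delta) (d1 : delta < 1).

Lemma lnd : ln delta < 0.
Proof. by apply: ln_lt0; rewrite d0 d1. Qed.

Lemma ln_exprz (j : int) : ln (delta ^ j) = j%:~R * ln delta.
Proof.
case: j => n.
  by rewrite -exprnP lnXn // -mulr_natl.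
rewrite NegzE -invr_expz -exprnP lnV ?posrE ?exprn_gt0 // lnXn //.
by rewrite intrN mulNr -mulr_natl.
Qed.

Definition lvl (x : R) : int := Num.ceil (ln x / ln delta).

Lemma dpos (j : int) : 0 < delta ^ j.
Proof. exact: exprz_gt0. Qed.

Lemma le_dX (x : R) (j : int) : 0 < x -> (delta ^ j <= x) = (lvl x <= j).
Proof.
move=> x0; rewrite -ler_ln ?posrE ?dpos // ln_exprz.
rewrite /lvl real_ceil_le_int ?num_real //.
by rewrite (ler_ndivrMr _ _ lnd).
Qed.
End Levels.

Section Levels2.
Variables (R : realType) (delta : R).
Hypotheses (d0 : 0 < delta) (d1 : delta < 1).
Local Notation lvl := (lvl delta).

Lemma lt_dX (x : R) (j : int) : 0 < x -> (x < delta ^ j) = (j < lvl x).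
Proof. by move=> x0; rewrite ltNge le_dX // -ltNge. Qed.

Lemma lvl_dX (j : int) : lvl (delta ^ j) = j.
Proof.
rewrite /lvl ln_exprz // mulfK ?intrKceil //.
by rewrite lt_eqF // lnd.
Qed.

Lemma dX_le (a b : int) : (delta ^ a <= delta ^ b) = (b <= a).
Proof. by rewrite le_dX ?dpos // lvl_dX. Qed.

Lemma preIcoE (X : Type) (f : X -> R) (a b : int) : (forall x, 0 < f x) ->
  preIco f (delta ^ a) (delta ^ b) = [set x | (b < lvl (f x)) && (lvl (f x) <= a)].
Proof.
move=> fpos; apply/seteqP; split => x /=; rewrite /preIco /=.
  by move=> /andP[h1 h2]; rewrite -le_dX // -lt_dX // h1 h2.
by move=> /andP[h1 h2]; rewrite le_dX // lt_dX // h1 h2.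
Qed.

Lemma ratio1 (x y : R) : 0 < x -> 0 < y ->
  (lvl x <= lvl y + 1)%R -> (lvl y <= lvl x + 1)%R -> comparable_by (delta ^ 2) x y.
Proof.
move=> x0 y0 h1 h2; rewrite /comparable_by.
have dn0 : delta != 0 by rewrite gt_eqF.
have Hx1 : delta ^ (lvl x) <= x by rewrite le_dX.
have Hx2 : x < delta ^ (lvl x - 1) by rewrite lt_dX // ltrBlDr ltrDl.
have Hy1 : delta ^ (lvl y) <= y by rewrite le_dX.
have Hy2 : y < delta ^ (lvl y - 1) by rewrite lt_dX // ltrBlDr ltrDl.
apply/andP; split.
- rewrite ler_pdivlMr //.
  apply: le_trans Hx1; apply: le_trans (_ : delta ^ (lvl y + 1) <= _); last by rewrite dX_le.
  have -> : delta ^ (lvl y + 1) = delta ^ 2 * delta ^ (lvl y - 1).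
    by rewrite -expfzDr // addrCA addrC; congr (_ ^ _); rewrite addrC -addrA.
  by rewrite ler_pM2l ?ltW // exprz_gt0.
- rewrite ler_pdivrMr // invr_expz.
  apply: le_trans (ltW Hx2) _; apply: le_trans (_ : delta ^ (lvl y - 2) <= _).
    by rewrite dX_le; lia.
  have -> : delta ^ (lvl y - 2) = delta ^ (-2) * delta ^ (lvl y).
    by rewrite -expfzDr // addrC.
  by rewrite ler_pM2l // exprz_gt0.
Qed.

Lemma ratio_weak (d d' a b : R) : 0 < d' -> d' <= d -> comparable_by d a b -> comparable_by d' a b.
Proof.
move=> d'0 dd /andP[h1 h2]; apply/andP; split; first exact: le_trans h1.
apply: le_trans h2 _; rewrite lef_pV2 ?posrE //; exact: lt_le_trans dd.
Qed.

Lemma ratio_big (N : nat) (M a b : R) : 0 < M ->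
  delta ^+ N <= a <= M -> delta ^+ N <= b <= M -> comparable_by (delta ^+ N / M) a b.
Proof.
move=> M0 /andP[a1 a2] /andP[b1 b2].
have dN : 0 < delta ^+ N by rewrite exprn_gt0.
have a0 : 0 < a by apply: lt_le_trans a1.
have b0 : 0 < b by apply: lt_le_trans b1.
rewrite /comparable_by; apply/andP; split.
- rewrite (ler_pdivlMr _ _ b0); apply: le_trans a1.
  by rewrite mulrAC (ler_pdivrMr _ _ M0) ler_pM2l.
- rewrite invf_div (ler_pdivrMr _ _ b0) mulrAC (ler_pdivlMr _ _ dN).
  by apply: ler_pM => //; apply: ltW.
Qed.
End Levels2.

Section Transfer.
Variables (R : realType) (delta : R).
Hypotheses (d0 : 0 < delta) (d1 : delta < 1).
Local Notation lvl := (lvl delta).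
Local Open Scope card_scope.

Lemma transfer (X Y : Type) (f : X -> R) (g : Y -> R) (L0 : int) (n0 : nat) :
  (forall x, 0 < f x) -> (forall y, 0 < g y) ->
  (forall x, L0 <= lvl (f x)) -> (forall y, L0 <= lvl (g y)) ->
  (forall (k : int) (l : nat), L0 + n0%:Z - 1 <= k -> (1 <= l)%N ->
     preIco f (delta ^ (k + l%:Z)) (delta ^ k) #<=
     preIco g (delta ^ (k + l%:Z + 1)) (delta ^ (k - 1))) ->
  forall a b : nat,
   [set x | (n0 <= `|lvl (f x) - L0|%N)%N /\ (a <= `|lvl (f x) - L0|%N <= b)%N] #<=
   [set y | (a.-1 <= `|lvl (g y) - L0|%N <= b.+1)%N].
Proof.
move=> fpos gpos fL gL hyp a b.
have [ab|ba] := leqP (maxn a n0) b; last first.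
  apply: card_le_trans (subset_card_le (_ : _ `<=` set0)) (card_ge0 _ _).
  move=> x [h1 h2] /=; have := fL x; lia.
have := hyp (L0 + (maxn a n0)%:Z - 1) (b - maxn a n0).+1 ltac:(lia) isT.
rewrite !preIcoE // => H.
apply: card_le_trans (card_le_trans (subset_card_le _) H) (subset_card_le _).
  move=> x [h1 h2] /=; have := fL x; lia.
move=> y /= h; have := gL y; lia.
Qed.
End Transfer.

Unset Implicit Arguments. Set Strict Implicit.
Local Open Scope classical_set_scope.
Local Open Scope ring_scope.

Lemma empty_card_le (X Y : Type) (A : set X) (B : set Y) :
  ~ inhabited Y -> (A #<= B)%card -> forall x, ~ A x.
Proof.
move=> nY AB x Ax.
have B0 : B = set0 by apply/seteqP; split => y // _; apply: nY.
rewrite B0 in AB; move/card_le0P: AB => A0.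
by rewrite A0 in Ax.
Qed.

Section Main.
Variables (R : realType) (T S : Type) (N : nat) (delta M : R)
    (tau : T -> R) (sigma : S -> R).
Hypotheses (hN : (1 <= N)%N) (d0 : 0 < delta) (d1 : delta < 1) (M1 : 1 <= M)
  (htau : forall t, 0 < tau t <= M) (hsig : forall s, 0 < sigma s <= M).

Let tpos t : 0 < tau t. Proof. by case/andP: (htau t). Qed.
Let spos s : 0 < sigma s. Proof. by case/andP: (hsig s). Qed.
Let M0 : 0 < M. Proof. exact: lt_le_trans ltr01 M1. Qed.
Let L0 := lvl delta M.

Let Lx x : 0 < x -> x <= M -> L0 <= lvl delta x.
Proof.
move=> x0 xM; rewrite /L0 -le_dX //; apply: le_trans xM.
by rewrite le_dX.
Qed.

Let tL t : L0 <= lvl delta (tau t).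
Proof. by case/andP: (htau t) => ? ?; apply: Lx. Qed.
Let sL s : L0 <= lvl delta (sigma s).
Proof. by case/andP: (hsig s) => ? ?; apply: Lx. Qed.

Let L0le : L0 <= 0.
Proof. by rewrite /L0 -le_dX // expr0z. Qed.

Let nl x := `|lvl delta x - L0|%N.

Let d' := delta ^ 2 * (delta ^+ N / M).

Let dN1 : delta ^+ N <= 1.
Proof. by apply: exprn_ile1; [apply: ltW|apply: ltW]. Qed.

Let c1 : delta ^+ N / M <= 1.
Proof. by rewrite ler_pdivrMr // mul1r; apply: le_trans M1. Qed.

Let cpos : 0 < delta ^+ N / M.
Proof. by rewrite divr_gt0 // exprn_gt0. Qed.

Let d2pos : 0 < delta ^ 2.
Proof. exact: exprz_gt0. Qed.

Let d'pos : 0 < d'.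
Proof. by rewrite /d' mulr_gt0. Qed.

Let close x y : 0 < x -> 0 < y -> L0 <= lvl delta x -> L0 <= lvl delta y ->
  (nl x <= (nl y).+1)%N -> (nl y <= (nl x).+1)%N -> comparable_by d' x y.
Proof.
move=> x0 y0 Lxx Lyy h1 h2.
apply: (ratio_weak d'pos _ (ratio1 d0 d1 x0 y0 _ _)).
- by rewrite /d' ler_piMr // ltW.
- exact: arA1 Lxx Lyy h1.
- exact: arA1 Lyy Lxx h2.
Qed.

Let bigC x y : delta ^+ N <= x <= M -> delta ^+ N <= y <= M -> comparable_by d' x y.
Proof.
move=> hx hy; apply: (ratio_weak d'pos _ (ratio_big d0 M0 hx hy)).
rewrite /d' ler_piMl ?ltW //; rewrite -exprnP exprn_ilt1 // ?ltW //.
Qed.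

Let one_big : delta ^+ N <= 1 <= M.
Proof. by rewrite dN1 M1. Qed.

Let nN := `|(N%:Z + 1 - L0)%R|%N.

Let big_of x : 0 < x -> x <= M -> ~ (nN <= nl x)%N -> delta ^+ N <= x <= M.
Proof.
move=> x0 xM h; rewrite xM andbT exprnP le_dX //.
exact: arA2 (Lx _ x0 xM) L0le h.
Qed.

Let bigT t : ~ (nN <= nl (tau t))%N -> delta ^+ N <= tau t <= M.
Proof. by case/andP: (htau t) => ? ?; apply: big_of. Qed.
Let bigS s : ~ (nN <= nl (sigma s))%N -> delta ^+ N <= sigma s <= M.
Proof. by case/andP: (hsig s) => ? ?; apply: big_of. Qed.

Let gen (n0 : nat) :
  (forall (k : int) (l : nat), L0 + n0%:Z - 1 <= k -> (1 <= l)%N ->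
     count_hyp delta tau sigma k l) ->
  forall (t0 : T) (s0 : S),
  exists (DT' : set T) (DS' : set S) (mm0 : T -> S) (mm0' : S -> T),
   mapsto DT' DS' mm0 /\ mapsto DS' DT' mm0' /\
   (forall t, DT' t -> mm0' (mm0 t) = t) /\ (forall s, DS' s -> mm0 (mm0' s) = s) /\
   (forall t, (n0 <= nl (tau t))%N -> DT' t) /\ (forall s, (n0 <= nl (sigma s))%N -> DS' s) /\
   (forall t, DT' t -> comparable_by d' (tau t) (sigma (mm0 t))).
Proof.
move=> H t0 s0.
have HT := transfer d0 d1 (f:=tau) (g:=sigma) (L0:=L0) (n0:=n0) tpos spos tL sL
   (fun k l hk hl => proj1 (H k l hk hl)).
have HS := transfer d0 d1 (f:=sigma) (g:=tau) (L0:=L0) (n0:=n0) spos tpos sL tL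
   (fun k l hk hl => proj2 (H k l hk hl)).
have [f [fi fd]] := inj_levels s0 HT.
have [g [gi gd]] := inj_levels t0 HS.
have [sA [sB [m1 [m2 [K1 [K2 edge]]]]]] := MD_spec t0 s0 fi gi.
do 4 eexists; split; first exact: m1.
split; first exact: m2.
split; first exact: K1.
split; first exact: K2.
split; first by move=> t h; apply: sA.
split; first by move=> s h; apply: sB.
move=> t Dt; case: (edge t Dt) => [[At ->]|[Bs e]].
  by have [h1 h2] := fd t At; apply: close.
have [h1 h2] := gd _ Bs; rewrite e in h1 h2.
by apply: close.
Qed.


Let smallT_none (k0 : int) :
  (forall (k : int) (l : nat), k0 <= k -> (1 <= l)%N -> count_hyp delta tau sigma k l) ->
  ~ inhabited S -> forall t, k0 + 1 <= lvl delta (tau t) -> False.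
Proof.
move=> H nS t ht.
have [h _] := H (lvl delta (tau t) - 1) 1%N (arA3 ht) isT.
apply: (@empty_card_le _ _ _ _ nS h t); rewrite preIcoE //=; exact: arA4.
Qed.

Let smallS_none (k0 : int) :
  (forall (k : int) (l : nat), k0 <= k -> (1 <= l)%N -> count_hyp delta tau sigma k l) ->
  ~ inhabited T -> forall s, k0 + 1 <= lvl delta (sigma s) -> False.
Proof.
move=> H nT s hs.
have [_ h] := H (lvl delta (sigma s) - 1) 1%N (arA3 hs) isT.
apply: (@empty_card_le _ _ _ _ nT h s); rewrite preIcoE //=; exact: arA4.
Qed.

Lemma part1 :
  (forall (k : int) (l : nat), N%:Z <= k -> (1 <= l)%N ->
       count_hyp delta tau sigma k l) ->
   exists2 d'' : R, 0 < d'' &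
     [\/ exists eta : T -> S, bijective eta /\
            forall t, comparable_by d'' (tau t) (sigma (eta t)),
         exists (I : Type) (eta : T + I -> S), bijective eta /\
            forall t, comparable_by d'' (ext1 tau t) (sigma (eta t))
       | exists (I : Type) (eta : T -> S + I), bijective eta /\
            forall t, comparable_by d'' (tau t) (ext1 sigma (eta t))].
Proof.
move=> H; exists d' => //.
have H' : forall (k : int) (l : nat), L0 + nN%:Z - 1 <= k -> (1 <= l)%N ->
    count_hyp delta tau sigma k l.
  move=> k l hk hl; apply: H => //; exact: arA5 L0le hk.
have notsmallT : ~ inhabited S -> forall t, ~ (nN <= nl (tau t))%N.
  move=> nS t h; apply: (smallT_none _ H nS t); exact: arA6 (tL t) L0le h.
have notsmallS : ~ inhabited T -> forall s, ~ (nN <= nl (sigma s))%N.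
  move=> nT s h; apply: (smallS_none _ H nT s); exact: arA6 (sL s) L0le h.
have [[t0]|nT] := pselect (inhabited T); last first.
  apply: Or32; exists S.
  exists (fun x => match x with inl t => False_rect _ (nT (inhabits t)) | inr s => s end).
  split.
    exists (@inr T S); first by case=> [t|s] //; case: (nT (inhabits t)).
    by [].
  case=> [t|s] /=; first by case: (nT (inhabits t)).
  by apply: bigC => //; apply: bigS; apply: notsmallS.
have [[s0]|nS] := pselect (inhabited S); last first.
  apply: Or33; exists T, (@inr S T); split.
    exists (fun x => match x with inl s => False_rect _ (nS (inhabits s)) | inr t => t end).
      by [].
    by case=> [s|t] //; case: (nS (inhabits s)).
  move=> t /=; apply: bigC => //; apply: bigT; exact: notsmallT.
have [DT' [DS' [m0 [m0' [h1 [h2 [K1 [K2 [hA [hB hc]]]]]]]]]] := gen _ H' t0 s0.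
case: (assemble t0 s0 h1 h2 K1 K2) => [[I [eta [beta [e1 e2]]]]|[I [eta [beta e1]]]].
- apply: Or32; exists I, eta; split => // -[t|i] /=.
    case: (e1 t) => [[Dt ->]|[nD nDs]]; first exact: hc.
    apply: bigC; first by apply: bigT => h; apply: nD; exact: hA _ h.
    by apply: bigS => h; apply: nDs; exact: hB _ h.
  apply: bigC => //; apply: bigS => h; apply: (e2 i); exact: hB _ h.
- apply: Or33; exists I, eta; split => // t; move: (e1 t); case: (eta t) => [s|i] /=.
    case => [[Dt ->]|[nD nDs]]; first exact: hc.
    apply: bigC; first by apply: bigT => h; apply: nD; exact: hA _ h.
    by apply: bigS => h; apply: nDs; exact: hB _ h.
  move=> nD; apply: bigC => //; apply: bigT => h; exact: nD (hA _ h).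
Qed.

Lemma part2 :
  (forall (k : int) (l : nat), (1 <= l)%N -> count_hyp delta tau sigma k l) ->
   exists2 d'' : R, 0 < d'' &
     exists eta : T -> S, bijective eta /\
       forall t, comparable_by d'' (tau t) (sigma (eta t)).
Proof.
move=> H; exists d' => //.
have H' : forall (k : int) (l : nat), L0 + (0%N)%:Z - 1 <= k -> (1 <= l)%N ->
    count_hyp delta tau sigma k l by move=> k l _ hl; apply: H.
have H'' : forall (k : int) (l : nat), L0 - 1 <= k -> (1 <= l)%N ->
    count_hyp delta tau sigma k l by move=> k l _ hl; apply: H.
have [[t0]|nT] := pselect (inhabited T); last first.
  have [[s0]|nS] := pselect (inhabited S).
    by exfalso; apply: (smallS_none _ H'' nT s0); rewrite subrK.
  exists (fun t => False_rect _ (nT (inhabits t))); split.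
    exists (fun s => False_rect _ (nS (inhabits s))).
      by move=> t; case: (nT (inhabits t)).
    by move=> s; case: (nS (inhabits s)).
  by move=> t; case: (nT (inhabits t)).
have [[s0]|nS] := pselect (inhabited S); last first.
  by exfalso; apply: (smallT_none _ H'' nS t0); rewrite subrK.
have [DT' [DS' [m0 [m0' [h1 [h2 [K1 [K2 [hA [hB hc]]]]]]]]]] := gen _ H' t0 s0.
exists m0; split.
  exists m0'; first by move=> t; apply: K1; apply: hA.
  by move=> s; apply: K2; apply: hB.
by move=> t; apply: hc; apply: hA.
Qed.
End Main.

Local Open Scope classical_set_scope.
Local Open Scope ring_scope.

Theorem lemma3p1 (R : realType) (T S : Type) (N : nat) (delta M : R)
    (tau : T -> R) (sigma : S -> R) :
  (1 <= N)%N -> 0 < delta -> delta < 1 -> 1 <= M ->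
  (forall t, 0 < tau t <= M) -> (forall s, 0 < sigma s <= M) ->
  ((forall (k : int) (l : nat), N%:Z <= k -> (1 <= l)%N ->
       count_hyp delta tau sigma k l) ->
   exists2 d' : R, 0 < d' &
     [\/ exists eta : T -> S, bijective eta /\
            forall t, comparable_by d' (tau t) (sigma (eta t)),
         exists (I : Type) (eta : T + I -> S), bijective eta /\
            forall t, comparable_by d' (ext1 tau t) (sigma (eta t))
       | exists (I : Type) (eta : T -> S + I), bijective eta /\
            forall t, comparable_by d' (tau t) (ext1 sigma (eta t))])
  /\
  ((forall (k : int) (l : nat), (1 <= l)%N -> count_hyp delta tau sigma k l) ->
   exists2 d' : R, 0 < d' &
     exists eta : T -> S, bijective eta /\
       forall t, comparable_by d' (tau t) (sigma (eta t))).
Proof.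
move=> hN d0 d1 M1 htau hsig; split.
- exact: (@part1 R T S N delta M tau sigma d0 d1 M1 htau hsig).
- exact: (@part2 R T S N delta M tau sigma d0 d1 M1 htau hsig).
Qed.
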